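(* Let $\mathscr{X},\mathscr{Y},\mathscr{Z}$ be real Banach spaces with duals $\mathscr{X}^*,\mathscr{Y}^*,\mathscr{Z}^*$, let $A:\mathscr{X}\to\mathscr{Y}$, $B:\mathscr{X}\to\mathscr{Z}$ be bounded linear operators with adjoints $A^*,B^*$, let $\mathbf{y}_0\in\mathscr{Y}$ and $\rho>0$. Suppose $\hat{\mathbf{x}}\in\mathscr{X}$ satisfies $$\|\mathbf{y}_0-A\hat{\mathbf{x}}\|_{\mathscr{Y}}+\rho\|B\hat{\mathbf{x}}\|_{\mathscr{Z}}=\inf\{\|\mathbf{y}_0-A\mathbf{x}\|_{\mathscr{Y}}+\rho\|B\mathbf{x}\|_{\mathscr{Z}}:\mathbf{x}\in\mathscr{X}\}>0,$$ and $(\hat\lambda,\hat\mu)\in\mathscr{Y}^*\times\mathscr{Z}^*$ satisfies $\max\{\|\hat\lambda\|_{\mathscr{Y}^*},\|\hat\mu\|_{\mathscr{Z}^*}\}=1$, $A^*\hat\lambda+\rho B^*\hat\mu=0$ and $$\langle\mathbf{y}_0,\hat\lambda\rangle_{\mathscr{Y}}=\sup\{|\langle\mathbf{y}_0,\lambda\rangle_{\mathscr{Y}}|:\ \max\{\|\lambda\|_{\mathscr{Y}^*},\|\mu\|_{\mathscr{Z}^*}\}\le1,\ A^*\lambda+\rho B^*\mu=0\}>0.$$ Then: 1. If $\|\hat\lambda\|_{\mathscr{Y}^*}>\|\hat\mu\|_{\mathscr{Z}^*}$, then $B\hat{\mathbf{x}}=0$ and $\|\mathbf{y}_0-A\hat{\mathbf{x}}\|_{\mathscr{Y}}=\langle\mathbf{y}_0,\hat\lambda\rangle_{\mathscr{Y}}$.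 2. If $\|\hat\lambda\|_{\mathscr{Y}^*}<\|\hat\mu\|_{\mathscr{Z}^*}$, then $A\hat{\mathbf{x}}=\mathbf{y}_0$ and $\rho\|B\hat{\mathbf{x}}\|_{\mathscr{Z}}=\langle\mathbf{y}_0,\hat\lambda\rangle_{\mathscr{Y}}$. 3. If $\|\hat\lambda\|_{\mathscr{Y}^*}=\|\hat\mu\|_{\mathscr{Z}^*}$, then one of the following holds: (i) $B\hat{\mathbf{x}}=0$ and $\|\mathbf{y}_0-A\hat{\mathbf{x}}\|_{\mathscr{Y}}=\langle\mathbf{y}_0,\hat\lambda\rangle_{\mathscr{Y}}$; (ii) $A\hat{\mathbf{x}}=\mathbf{y}_0$ and $\rho\|B\hat{\mathbf{x}}\|_{\mathscr{Z}}=\langle\mathbf{y}_0,\hat\lambda\rangle_{\mathscr{Y}}$; (iii) $\mathbf{y}_0-A\hat{\mathbf{x}}\ne0$, $B\hat{\mathbf{x}}\ne0$, $(\mathbf{y}_0-A\hat{\mathbf{x}})/\|\mathbf{y}_0-A\hat{\mathbf{x}}\|_{\mathscr{Y}}$ is norming for $\hat\lambda$ and $-B\hat{\mathbf{x}}/\|B\hat{\mathbf{x}}\|_{\mathscr{Z}}$ is norming for $\hat\mu$.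
   Context: $\langle\mathbf{y},\lambda\rangle_{\mathscr{Y}}:=\lambda(\mathbf{y})$. For $\lambda\in\mathscr{Y}^*$, a vector $\mathbf{y}\in\mathscr{Y}$ is norming for $\lambda$ if $\|\mathbf{y}\|_{\mathscr{Y}}=1$ and $\langle\mathbf{y},\lambda\rangle_{\mathscr{Y}}=\|\lambda\|_{\mathscr{Y}^*}$; similarly for $\mathscr{Z}$. *)

(* Defs.v *)
From HB Require Import structures.
From mathcomp Require Import all_boot all_order all_algebra.
From mathcomp Require Import all_classical all_reals all_analysis.
Set Implicit Arguments. Unset Strict Implicit. Unset Printing Implicit Defensive.
Import Order.TTheory GRing.Theory Num.Theory.
Import numFieldNormedType.Exports.
Local Open Scope classical_set_scope.
Local Open Scope ring_scope.

Definition dnorm (R : realType) (V : normedModType R) (l : V -> R) : R :=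
  sup [set `|l v| | v in [set v : V | `|v| <= 1]].

Definition norming (R : realType) (V : normedModType R) (l : V -> R) (y : V) : Prop :=
  `|y| = 1 /\ l y = dnorm l.

Definition primal_val (R : realType) (X Y Z : normedModType R)
  (A : X -> Y) (B : X -> Z) (y0 : Y) (rho : R) : R :=
  inf [set `|y0 - A x| + rho * `|B x| | x in [set: X]].

(* Value of the dual problem
   sup { |<y0, l>| : l in Y^*, m in Z^*, max(||l||,||m||) <= 1, A^* l + rho B^* m = 0 }
   where Y^*, Z^* are continuous linear functionals and (A^* l)(x) = l (A x). *)
Definition dual_val (R : realType) (X Y Z : normedModType R)
  (A : X -> Y) (B : X -> Z) (y0 : Y) (rho : R) : R :=
  sup [set r : R | exists (l : {linear Y -> R^o}) (m : {linear Z -> R^o}),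
        [/\ continuous (l : Y -> R), continuous (m : Z -> R),
            Num.max (dnorm (l : Y -> R)) (dnorm (m : Z -> R)) <= 1,
            (forall x : X, l (A x) + rho * m (B x) = 0) &
            r = `|l y0|]].

(* Main.v *)
Require Import Defs.
From HB Require Import structures.
From mathcomp Require Import all_boot all_order all_algebra.
From mathcomp Require Import all_classical all_reals all_analysis.
From mathcomp Require Import ring lra.
Set Implicit Arguments. Unset Strict Implicit. Unset Printing Implicit Defensive.
Import Order.TTheory GRing.Theory Num.Theory.
Import numFieldNormedType.Exports.
Local Open Scope classical_set_scope.
Local Open Scope ring_scope.

Lemma inf_add2 (R : realType) (S1 S2 : set R) c : S1 !=set0 -> S2 !=set0 ->
  (forall x y, S1 x -> S2 y -> c <= x + y) -> c <= inf S1 + inf S2.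
Proof.
move=> n1 n2 h.
have h1 : forall y, S2 y -> c - y <= inf S1.
  move=> y S2y; apply: lb_le_inf => // x S1x; have := h x y S1x S2y; lra.
have : c - inf S1 <= inf S2.
  apply: lb_le_inf => // y S2y; have := h1 y S2y; lra.
lra.
Qed.

Section HBsec.
Variables (R : realType) (V : lmodType R).
Implicit Types (q p : V -> R) (u v w : V).

Definition sublin q := (forall u v, q (u + v) <= q u + q v) /\
  (forall a v, 0 <= a -> q (a *: v) <= a * q v).

Lemma sublin0 q : sublin q -> q 0 = 0.
Proof.
move=> [hD hZ]; have := hZ 0 0 (lexx 0); rewrite scale0r mul0r => h1.
have := hD 0 0; rewrite addr0 => h2; lra.
Qed.

Lemma sublinN q v : sublin q -> - q (- v) <= q v.
Proof.
move=> hq; have := hq.1 v (- v); rewrite subrr (sublin0 hq) => h; lra.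
Qed.

Lemma sublinZ q a v : sublin q -> 0 <= a -> q (a *: v) = a * q v.
Proof.
move=> hq; rewrite le_eqVlt => /orP[/eqP <-|a0].
  by rewrite scale0r mul0r sublin0.
apply/eqP; rewrite eq_le; apply/andP; split; first exact: hq.2 (ltW a0).
have := hq.2 a^-1 (a *: v); rewrite scalerA mulVf ?gt_eqF // scale1r => h.
have ia : 0 <= a^-1 by rewrite invr_ge0 ltW.
move: (h ia) => h'; have := ler_wpM2l (ltW a0) h'.
by rewrite mulrA mulfV ?gt_eqF // mul1r.
Qed.

Definition rr q u v := inf [set q (v + t *: u) - t * q u | t in [set t : R | 0 <= t]].

Lemma rr_lb q u v : sublin q ->
  lbound [set q (v + t *: u) - t * q u | t in [set t : R | 0 <= t]] (- q (- v)).
Proof.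
move=> hq _ [t /= t0 <-].
have := hq.1 (v + t *: u) (- v).
rewrite addrAC subrr add0r sublinZ // => h; lra.
Qed.

Lemma rr_has q u v : sublin q ->
  has_lbound [set q (v + t *: u) - t * q u | t in [set t : R | 0 <= t]].
Proof. by move=> hq; exists (- q (- v)); exact: rr_lb. Qed.

Lemma rr_ne q u v :
  [set q (v + t *: u) - t * q u | t in [set t : R | 0 <= t]] !=set0.
Proof. by exists (q (v + 0 *: u) - 0 * q u); exists 0 => //=. Qed.

Lemma rr_elt q u v t : sublin q -> 0 <= t -> rr q u v <= q (v + t *: u) - t * q u.
Proof. by move=> hq t0; have := ge_inf (rr_has u v hq); apply; exists t. Qed.

Lemma rr_le q u v : sublin q -> rr q u v <= q v.
Proof. by move=> hq; have := rr_elt u v hq (lexx 0); rewrite scale0r addr0 mul0r subr0. Qed.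

Lemma rr_Nu q u : sublin q -> rr q u (- u) <= - q u.
Proof.
move=> hq; have := rr_elt u (- u) hq ler01.
by rewrite scale1r addNr (sublin0 hq) mul1r sub0r.
Qed.

Lemma rr_sublin q u : sublin q -> sublin (rr q u).
Proof.
move=> hq; split=> [v1 v2|a v].
  rewrite /rr; apply: inf_add2; try exact: rr_ne.
  move=> _ _ [t1 /= t10 <-] [t2 /= t20 <-].
  have := rr_elt u (v1 + v2) hq (addr_ge0 t10 t20).
  have := hq.1 (v1 + t1 *: u) (v2 + t2 *: u).
  rewrite addrACA -scalerDl mulrDl => h1 h2; lra.
rewrite le_eqVlt => /orP[/eqP <-|a0].
  by rewrite scale0r mul0r; have := rr_le u 0 hq; rewrite (sublin0 hq).
rewrite -ler_pdivrMl //.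
apply: lb_le_inf; first exact: rr_ne.
move=> _ [t /= t0 <-].
rewrite ler_pdivrMl //.
have := rr_elt u (a *: v) hq (mulr_ge0 (ltW a0) t0).
by rewrite -scalerA -scalerDr (sublinZ (v + t *: u) hq (ltW a0)) mulrBr mulrA.
Qed.

Variables (p : V -> R) (w : V) (hp : sublin p).

Definition good q := [/\ sublin q, (forall v, q v <= p v) & q (- w) <= - p w].

Definition T := {q : V -> R | good q}.

Definition Rl (s t : T) : bool := `[< forall v, sval t v <= sval s v >].

Lemma HB_ext : exists g : V -> R, [/\ (forall u v, g (u + v) = g u + g v),
   (forall a v, g (a *: v) = a * g v), (forall v, g v <= p v) & g w = p w].
Proof.
have g0 : good (rr p w).
  split; [exact: rr_sublin | move=> v; exact: rr_le | exact: rr_Nu].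
pose t0 : T := exist _ _ g0.
have [] := @ZL_preorder T t0 Rl.
- by move=> t; apply/asboolP => v.
- move=> r s t /asboolP h1 /asboolP h2; apply/asboolP => v.
  exact: le_trans (h2 v) (h1 v).
- move=> A Atot.
  have [[s0 As0]|A0] := pselect (A !=set0); last first.
    exists t0 => s As; exfalso; apply: A0; by exists s.
  pose qi v := inf [set sval s v | s in A].
  have lbA v : lbound [set sval s v | s in A] (- p (- v)).
    move=> _ [s As <-]; case: (svalP s) => hs hsp _.
    have := sublinN v hs; have := hsp (- v); lra.
  have hasA v : has_lbound [set sval s v | s in A] by exists (- p (- v)).
  have neA v : [set sval s v | s in A] !=set0 by exists (sval s0 v); exists s0.
  have qile v s : A s -> qi v <= sval s v.
    by move=> As; have := ge_inf (hasA v); apply; exists s.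
  have gi : good qi.
    case: (svalP s0) => hs0 hs0p hs0w.
    split.
    - split.
        move=> v1 v2; apply: inf_add2 => // _ _ [s1 As1 <-] [s2 As2 <-].
        case: (svalP s1) => h1 _ _; case: (svalP s2) => h2 _ _.
        have [/asboolP r12|/asboolP r21] := Atot _ _ As1 As2.
        + apply: le_trans (qile _ _ As2) _; apply: le_trans (h2.1 v1 v2) _.
          by rewrite lerD2r.
        + apply: le_trans (qile _ _ As1) _; apply: le_trans (h1.1 v1 v2) _.
          by rewrite lerD2l.
      move=> a v; rewrite le_eqVlt => /orP[/eqP <-|a0].
        by rewrite scale0r mul0r; apply: le_trans (qile 0 _ As0) _; rewrite sublin0.
      suff : a^-1 * qi (a *: v) <= qi v by rewrite ler_pdivrMl.
      apply: lb_le_inf => // _ [s As <-]; rewrite ler_pdivrMl //.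
      case: (svalP s) => h _ _.
      by apply: le_trans (qile _ _ As) _; apply: h.2; exact: ltW.
    - by move=> v; apply: le_trans (qile v _ As0) _.
    - by apply: le_trans (qile _ _ As0) _.
  exists (exist _ _ gi) => s As; apply/asboolP => v /=; exact: qile.
move=> [q [hq hqp hqw]] /= qmax.
have qN u : q (- u) = - q u.
  have gu : good (rr q u).
    split; [exact: rr_sublin | move=> v; apply: le_trans (rr_le _ _ hq) _; exact: hqp|].
    by apply: le_trans (rr_le _ _ hq) _.
  have /asboolP := qmax (exist _ _ gu) (asboolT (fun v => rr_le u v hq)).
  move=> /(_ (- u)) /= h; have := rr_Nu u hq; have := sublinN (- u) hq.
  by rewrite opprK => h1 h2; apply/eqP; rewrite eq_le; apply/andP; split; lra.
have qD u v : q (u + v) = q u + q v.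
  apply/eqP; rewrite eq_le hq.1 /=.
  have := hq.1 (- u) (- v); rewrite -opprD !qN => h; lra.
exists q; split => //.
- move=> a v; have [a0|a0] := leP 0 a; first by rewrite sublinZ.
  rewrite -[a *: v]opprK -scaleNr qN sublinZ //; first lra.
  by rewrite oppr_ge0 ltW.
- have := hqp w; have := hqw; rewrite qN => h1 h; apply/eqP; rewrite eq_le h /=; lra.
Qed.

End HBsec.
Section dn.
Variables (R : realType) (V : normedModType R) (l : {linear V -> R^o}).

Lemma lin_bound : continuous (l : V -> R) ->
  exists M, 0 < M /\ forall v, `|l v| <= M * `|v|.
Proof.
move=> hl; have /linear_boundedP := (linear_bounded_continuous l).2 hl.
move=> [M [Mr HM]]; exists (Num.max M 0 + 1); split.
  have : 0 <= Num.max M 0 by rewrite le_max lexx orbT.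
  lra.
apply: HM; have : M <= Num.max M 0 by rewrite le_max lexx.
lra.
Qed.

Lemma dnorm_ne : [set `|l v| | v in [set v : V | `|v| <= 1]] !=set0.
Proof. by exists `|l 0|; exists 0 => //=; rewrite normr0. Qed.

Lemma dnorm_has : continuous (l : V -> R) ->
  has_ubound [set `|l v| | v in [set v : V | `|v| <= 1]].
Proof.
move=> /lin_bound [M [M0 HM]]; exists M => _ [v /= v1 <-].
apply: le_trans (HM v) _; have := normr_ge0 v; nra.
Qed.

Lemma dnorm_ge : continuous (l : V -> R) -> forall v, `|l v| <= dnorm (l : V -> R) * `|v|.
Proof.
move=> hl v; have [->|v0] := eqVneq v 0.
  by rewrite linear0 !normr0 mulr0.
have nv : 0 < `|v| by rewrite normr_gt0.
have e : v = `|v| *: (`|v|^-1 *: v) by rewrite scalerA mulfV ?gt_eqF // scale1r.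
rewrite [in X in `|l X|]e linearZ /= normrZ normr_id mulrC ler_wpM2r //.
apply: (ub_le_sup (dnorm_has hl)); exists (`|v|^-1 *: v) => //=.
by rewrite normrZ normfV normr_id mulVf ?gt_eqF.
Qed.


Lemma dnorm_le (c : R) : 0 <= c -> (forall v, `|l v| <= c * `|v|) -> dnorm (l : V -> R) <= c.
Proof.
move=> c0 h; apply: ge_sup; first exact: dnorm_ne.
move=> _ [v /= v1 <-]; apply: le_trans (h v) _; have := normr_ge0 v; nra.
Qed.

End dn.
Definition mkfun (R : realType) (U : lmodType R) (f : U -> R)
  (hf : forall a u v, f (a *: u + v) = a * f u + f v) : U -> R^o := f.
Lemma mkfun_lin (R : realType) (U : lmodType R) (f : U -> R)
  (hf : forall a u v, f (a *: u + v) = a * f u + f v) : linear_for *:%R (mkfun hf).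
Proof. move=> a u v; exact: hf. Qed.
HB.instance Definition _ (R : realType) (U : lmodType R) (f : U -> R) hf := GRing.isLinear.Build R U R^o *:%R (@mkfun R U f hf) (mkfun_lin hf).

Lemma pair_l (R : realType) (Y Z : lmodType R) (a : R) (y y' : Y) :
  ((a *: y + y', 0) : (Y * Z)%type) = a *: (y, 0) + (y', 0).
Proof. by congr (_, _); transitivity (a *: (0:Z) + 0); [by rewrite scaler0 addr0 | by []]. Qed.

Lemma pair_r (R : realType) (Y Z : lmodType R) (a : R) (z z' : Z) :
  ((0, a *: z + z') : (Y * Z)%type) = a *: (0, z) + (0, z').
Proof. by congr (_, _); transitivity (a *: (0:Y) + 0); [by rewrite scaler0 addr0 | by []]. Qed.

Lemma pair_add (R : realType) (Y Z : lmodType R) (y : Y) (z : Z) :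
  ((y, 0) + (0, z) : (Y * Z)%type) = (y, z).
Proof.
congr (_, _); [transitivity (y + 0) | transitivity (0 + z)];
  by rewrite ?addr0 ?add0r.
Qed.

Unset Implicit Arguments.
Theorem proposition3p6 (R : realType) (X Y Z : completeNormedModType R)
  (A : {linear X -> Y}) (B : {linear X -> Z})
  (hA : continuous (A : X -> Y)) (hB : continuous (B : X -> Z))
  (y0 : Y) (rho : R) (hrho : 0 < rho)
  (xh : X)
  (hxh : `|y0 - A xh| + rho * `|B xh| = primal_val A B y0 rho)
  (hpos : 0 < primal_val A B y0 rho)
  (lh : {linear Y -> R^o}) (mh : {linear Z -> R^o})
  (hlc : continuous (lh : Y -> R)) (hmc : continuous (mh : Z -> R))
  (hmax : Num.max (dnorm (lh : Y -> R)) (dnorm (mh : Z -> R)) = 1)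
  (hadj : forall x : X, lh (A x) + rho * mh (B x) = 0)
  (hlh : lh y0 = dual_val A B y0 rho)
  (hdpos : 0 < dual_val A B y0 rho) :
  (dnorm (mh : Z -> R) < dnorm (lh : Y -> R) ->
     B xh = 0 /\ `|y0 - A xh| = lh y0) /\
  (dnorm (lh : Y -> R) < dnorm (mh : Z -> R) ->
     A xh = y0 /\ rho * `|B xh| = lh y0) /\
  (dnorm (lh : Y -> R) = dnorm (mh : Z -> R) ->
     [\/ B xh = 0 /\ `|y0 - A xh| = lh y0,
         A xh = y0 /\ rho * `|B xh| = lh y0 |
         [/\ y0 - A xh <> 0, B xh <> 0,
             norming (lh : Y -> R) (`|y0 - A xh|^-1 *: (y0 - A xh)) &
             norming (mh : Z -> R) (`|B xh|^-1 *: (- B xh))]]).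
Proof.
have rho0 : rho != 0 by rewrite gt_eqF.
have strong : primal_val A B y0 rho <= lh y0.
  pose pM (v : (Y * Z)%type) :=
    inf [set `|v.1 - A x| + rho * `|v.2 - B x| | x in [set: X]].
  have pM_ne v : [set `|v.1 - A x| + rho * `|v.2 - B x| | x in [set: X]] !=set0.
    by exists (`|v.1 - A 0| + rho * `|v.2 - B 0|); exists 0.
  have pM_has v : has_lbound [set `|v.1 - A x| + rho * `|v.2 - B x| | x in [set: X]].
    exists 0 => _ [x _ <-].
    exact: addr_ge0 (normr_ge0 _) (mulr_ge0 (ltW hrho) (normr_ge0 _)).
  have pM_elt v x : pM v <= `|v.1 - A x| + rho * `|v.2 - B x|.
    by have := ge_inf (pM_has v); apply; exists x.
  have pM_sub : sublin pM.
    split=> [v1 v2|a v].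
      apply: inf_add2 => // _ _ [x1 _ <-] [x2 _ <-].
      apply: le_trans (pM_elt _ (x1 + x2)) _.
      have p1 : (v1 + v2).1 = v1.1 + v2.1 by [].
      have p2 : (v1 + v2).2 = v1.2 + v2.2 by [].
      rewrite p1 p2 (raddfD A) (raddfD B) !opprD (addrACA v1.1) (addrACA v1.2).
      have h1 := ler_normD (v1.1 - A x1) (v2.1 - A x2).
      have h2 := ler_wpM2l (ltW hrho) (ler_normD (v1.2 - B x1) (v2.2 - B x2)).
      rewrite mulrDr in h2; lra.
    rewrite le_eqVlt => /orP[/eqP <-|a0].
      rewrite scale0r mul0r; apply: le_trans (pM_elt _ 0) _.
      have p1 : (0 : (Y * Z)%type).1 = 0 by [].
      have p2 : (0 : (Y * Z)%type).2 = 0 by [].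
      by rewrite p1 p2 !linear0 ?subr0 ?addr0 ?normr0 ?mulr0 ?addr0.
    rewrite -ler_pdivrMl //.
    apply: lb_le_inf => // _ [x _ <-].
    rewrite ler_pdivrMl //.
    apply: le_trans (pM_elt _ (a *: x)) _.
    have p1 : (a *: v).1 = a *: v.1 by [].
    have p2 : (a *: v).2 = a *: v.2 by [].
    rewrite p1 p2 [A _]linearZ [B _]linearZ -!scalerBr !normrZ gtr0_norm //.
    by rewrite le_eqVlt; apply/orP; left; apply/eqP; ring.
  have [g [gD gZ gp gw]] := HB_ext (y0, 0) pM_sub.
  have gle v : g v <= `|v.1| + rho * `|v.2|.
    by apply: le_trans (gp v) _; apply: le_trans (pM_elt v 0) _; rewrite !linear0 ?subr0 ?oppr0 ?addr0.
  have gM x : g (A x, B x) = 0.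
    have h1 := le_trans (gp _) (pM_elt (A x, B x) x).
    rewrite /= !subrr !normr0 mulr0 addr0 in h1.
    have h2 := le_trans (gp _) (pM_elt ((-1) *: ((A x, B x) : (Y * Z)%type)) (- x)).
    rewrite gZ in h2.
    have p1 : ((-1) *: ((A x, B x) : (Y * Z)%type)).1 = (-1) *: A x by [].
    have p2 : ((-1) *: ((A x, B x) : (Y * Z)%type)).2 = (-1) *: B x by [].
    rewrite p1 p2 !scaleN1r !linearN !subrr !normr0 mulr0 addr0 in h2.
    apply/eqP; rewrite eq_le h1 /=; lra.
  have fl a y y' : g (a *: y + y', 0) = a * g (y, 0) + g (y', 0).
    by rewrite pair_l gD gZ.
  have fm a z z' : rho^-1 * g (0, a *: z + z') =
      a * (rho^-1 * g (0, z)) + rho^-1 * g (0, z').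
    by rewrite pair_r gD gZ; ring.
  pose l : {linear Y -> R^o} := mkfun fl.
  pose m : {linear Z -> R^o} := mkfun fm.
  have lE y : l y = g (y, 0) by [].
  have mE z : m z = rho^-1 * g (0, z) by [].
  have lb y : `|l y| <= `|y|.
    have h y' : l y' <= `|y'|.
      by rewrite lE; apply: le_trans (gle _) _; rewrite /= normr0 mulr0 addr0.
    rewrite ler_norml; have := h (- y); rewrite linearN normrN => h2.
    have := h y; lra.
  have mb z : `|m z| <= `|z|.
    have h z' : m z' <= `|z'|.
      rewrite mE ler_pdivrMl //; apply: le_trans (gle _) _.
      by rewrite /= normr0 add0r.
    rewrite ler_norml; have := h (- z); rewrite linearN normrN => h2.
    have := h z; lra.
  have lc : continuous (l : Y -> R).
    apply: bounded_linear_continuous; apply/linear_boundedP.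
    exists 1; split; first exact: num_real.
    move=> r r1 x; apply: le_trans (lb x) _; exact: ler_peMl (normr_ge0 _) (ltW r1).
  have mc : continuous (m : Z -> R).
    apply: bounded_linear_continuous; apply/linear_boundedP.
    exists 1; split; first exact: num_real.
    move=> r r1 x; apply: le_trans (mb x) _; exact: ler_peMl (normr_ge0 _) (ltW r1).
  have dl1 : dnorm (l : Y -> R) <= 1 by apply: dnorm_le => // v; rewrite mul1r.
  have dm1 : dnorm (m : Z -> R) <= 1 by apply: dnorm_le => // v; rewrite mul1r.
  have inD : [set r : R | exists (l : {linear Y -> R^o}) (m : {linear Z -> R^o}),
        [/\ continuous (l : Y -> R), continuous (m : Z -> R),
            Num.max (dnorm (l : Y -> R)) (dnorm (m : Z -> R)) <= 1,
            (forall x : X, l (A x) + rho * m (B x) = 0) &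
            r = `|l y0|]] `|l y0|.
    exists l, m; split => //; first by rewrite ge_max dl1 dm1.
    move=> x; rewrite lE mE mulrA mulfV // mul1r -gD pair_add; exact: gM.
  have hasD : has_ubound [set r : R | exists (l : {linear Y -> R^o}) (m : {linear Z -> R^o}),
        [/\ continuous (l : Y -> R), continuous (m : Z -> R),
            Num.max (dnorm (l : Y -> R)) (dnorm (m : Z -> R)) <= 1,
            (forall x : X, l (A x) + rho * m (B x) = 0) &
            r = `|l y0|]].
    exists `|y0| => _ [l' [m' [l'c _ mx _ ->]]].
    move: mx; rewrite ge_max => /andP[d1 _].
    apply: le_trans (dnorm_ge l'c y0) _; exact: ler_piMl (normr_ge0 _) d1.
  have Dge : `|l y0| <= lh y0 by rewrite hlh; exact: (ub_le_sup hasD).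
  have Pg : primal_val A B y0 rho <= g (y0, 0).
    rewrite gw; apply: lb_le_inf => // _ [x _ <-].
    rewrite /= sub0r normrN.
    have hasP : has_lbound [set `|y0 - A x| + rho * `|B x| | x in [set: X]].
      exists 0 => _ [x' _ <-].
      exact: addr_ge0 (normr_ge0 _) (mulr_ge0 (ltW hrho) (normr_ge0 _)).
    by have := ge_inf hasP; apply; exists x.
  apply: le_trans Pg _; rewrite -lE; apply: le_trans Dge; exact: ler_norm.
set dl := dnorm (lh : Y -> R); set dm := dnorm (mh : Z -> R).
have := le_refl (Num.max dl dm); rewrite {2}hmax ge_max => /andP[dl1 dm1].
set u := y0 - A xh.
have key : lh y0 = lh u + rho * mh (- B xh).
  rewrite /u linearB linearN; have := hadj xh; lra.
have bnd1 : lh u <= dl * `|u| := le_trans (ler_norm _) (dnorm_ge hlc u).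
have bnd2 : mh (- B xh) <= dm * `|B xh|.
  by rewrite -(normrN (B xh)); exact: le_trans (ler_norm _) (dnorm_ge hmc _).
have h1 : dl * `|u| <= `|u| := ler_piMl (normr_ge0 _) dl1.
have h2 : dm * `|B xh| <= `|B xh| := ler_piMl (normr_ge0 _) dm1.
have h3 : rho * mh (- B xh) <= rho * `|B xh| :=
  ler_wpM2l (ltW hrho) (le_trans bnd2 h2).
move: strong; rewrite -hxh => strong.
have Eu : lh u = `|u| by apply/eqP; rewrite eq_le; apply/andP; split; lra.
have EB : rho * mh (- B xh) = rho * `|B xh|.
  by apply/eqP; rewrite eq_le; apply/andP; split; lra.
have Edl : dl * `|u| = `|u| by apply/eqP; rewrite eq_le; apply/andP; split; lra.
have EB' : mh (- B xh) = `|B xh| by apply: (mulfI rho0).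
have Edm : dm * `|B xh| = `|B xh| by apply/eqP; rewrite eq_le; apply/andP; split; lra.
have caseI : B xh = 0 -> B xh = 0 /\ `|y0 - A xh| = lh y0.
  move=> B0; split => //; have : rho * `|B xh| = 0 by rewrite B0 normr0 mulr0.
  rewrite -/u; lra.
have caseII : A xh = y0 -> A xh = y0 /\ rho * `|B xh| = lh y0.
  move=> A0; split => //; have u0 : `|u| = 0 by rewrite /u A0 subrr normr0.
  lra.
split; [|split].
- move=> lt; apply: caseI; apply/normr0_eq0.
  have dle : dl = 1 by move: hmax; rewrite max_l // ltW.
  have : (1 - dm) * `|B xh| = 0 by rewrite mulrBl mul1r Edm subrr.
  move/eqP; rewrite mulf_eq0 => /orP[|/eqP //].
  by rewrite subr_eq0 => /eqP dm1'; move: lt; rewrite -dm1' dle ltxx.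
- move=> lt; apply: caseII.
  have dme : dm = 1 by move: hmax; rewrite max_r // ltW.
  have : (1 - dl) * `|u| = 0 by rewrite mulrBl mul1r Edl subrr.
  move/eqP; rewrite mulf_eq0 => /orP[|/eqP/normr0_eq0/eqP].
    by rewrite subr_eq0 => /eqP dl1'; move: lt; rewrite -dl1' dme ltxx.
  by rewrite /u subr_eq0 => /eqP ->.
- move=> eqd.
  have dle : dl = 1 by move: hmax; rewrite -/dl -/dm -eqd maxxx.
  have dme : dm = 1 by rewrite -eqd.
  have [B0|B0] := eqVneq (B xh) 0; first by apply: Or31; apply: caseI.
  have [u0|u0] := eqVneq u 0.
    by apply: Or32; apply: caseII; apply/esym/eqP; rewrite -subr_eq0 -/u u0.
  have nu : 0 < `|u| by rewrite normr_gt0.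
  have nB : 0 < `|B xh| by rewrite normr_gt0.
  apply: Or33; split.
  + by apply/eqP.
  + by apply/eqP.
  + split.
      by rewrite normrZ normfV normr_id mulVf ?gt_eqF.
    rewrite linearZ /= Eu -/dl dle; rewrite -[LHS]/(`|u|^-1 * `|u|); by rewrite mulVf ?gt_eqF.
  + split.
      by rewrite normrZ normrN normfV normr_id mulVf ?gt_eqF.
    rewrite linearZ /= EB' -/dm dme; rewrite -[LHS]/(`|B xh|^-1 * `|B xh|); by rewrite mulVf ?gt_eqF.
Qed.
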